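(* Let $C_s=\begin{pmatrix}0&\mathbf 1_2\\-\mathbf 1_2&0\end{pmatrix}$ and $\mathrm{Sp}(4,\mathbb Z)=\{g\in M_4(\mathbb Z): g^TC_sg=C_s\}$. Consider the integer matrices $$S_1=\begin{pmatrix}0&0&1&0\\0&1&0&0\\-1&0&0&0\\0&0&0&1\end{pmatrix},\ S_2=\begin{pmatrix}1&0&0&0\\0&0&0&1\\0&0&1&0\\0&-1&0&0\end{pmatrix},\ Q_1=\begin{pmatrix}0&-1&0&0\\1&0&0&0\\0&0&0&-1\\0&0&1&0\end{pmatrix},\ Q_2=\begin{pmatrix}0&0&0&1\\0&0&1&0\\0&-1&0&0\\-1&0&0&0\end{pmatrix},$$ $$T_1=\begin{pmatrix}1&0&1&0\\0&1&0&0\\0&0&1&0\\0&0&0&1\end{pmatrix},\ T_2=\begin{pmatrix}1&0&0&0\\0&1&0&1\\0&0&1&0\\0&0&0&1\end{pmatrix},\ T_3=\begin{pmatrix}1&0&0&1\\0&1&1&0\\0&0&1&0\\0&0&0&1\end{pmatrix},\ T_4=\begin{pmatrix}1&1&0&0\\0&1&0&0\\0&0&1&0\\0&0&-1&1\end{pmatrix},$$ $$T_5=\begin{pmatrix}1&0&0&0\\-1&1&0&0\\0&0&1&1\\0&0&0&1\end{pmatrix},\ T_6=\begin{pmatrix}1&0&0&0\\0&1&0&0\\-1&0&1&0\\0&0&0&1\end{pmatrix},\ T_7=\begin{pmatrix}1&0&0&0\\0&1&0&0\\0&-1&1&0\\-1&0&0&1\end{pmatrix},\ T_8=\begin{pmatrix}1&0&0&0\\0&1&0&0\\0&0&1&0\\0&-1&0&1\end{pmatrix}.$$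 Then all these matrices lie in $\mathrm{Sp}(4,\mathbb Z)$, and: (i) the group $\mathfrak P_{32}$ generated by $S_1,S_2,Q_1,Q_2$ is finite of order $32$; it is generated by $\mathcal A=Q_1S_1$ and $\mathcal B=Q_2^3$, which satisfy $\mathcal A^8=\mathcal B^4=(\mathcal B\mathcal A)^4=\mathbf 1_4$; (ii) the set $\{\gamma T\gamma^{-1}:\gamma\in\mathfrak P_{32},\ T\in\{T_1^{\pm1},T_2^{\pm1},T_3^{\pm1},T_4^{\pm1}\}\}$ consists of exactly $16$ matrices, namely $T_1^{\pm1},\dots,T_8^{\pm1}$; (iii) $(T_1T_6)^6=(T_2T_8)^6=(T_3T_7)^6=(T_4T_5)^6=\mathbf 1_4$; (iv) consequently, letting $\mathfrak T$ be the group generated by $T_1,\dots,T_8$ and $\Delta_{32,8}$ the subgroup of $\mathrm{Sp}(4,\mathbb Z)$ generated by $\mathfrak P_{32}$ and $\mathfrak T$, every element of $\Delta_{32,8}$ can be written as $\gamma\, t$ with $\gamma\in\mathfrak P_{32}$, $t\in\mathfrak T$, and $\mathfrak T$ is a normal subgroup of $\Delta_{32,8}$.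
   Context: $\mathrm{Sp}(4,\mathbb R)$ acts on the Siegel upper half-plane of degree 2 (complex symmetric $2\times2$ matrices $Z$ with positive definite imaginary part) by $Z\mapsto (AZ+B)(CZ+D)^{-1}$ for $g=\begin{pmatrix}A&B\\C&D\end{pmatrix}$; $T_1,\dots,T_8$ are unipotent (parabolic) and $S_1,S_2,Q_1,Q_2$ lie in the maximal compact subgroup. *)

(* Defs.v *)
From HB Require Import structures.
From mathcomp Require Import all_boot all_order all_algebra.
Set Implicit Arguments. Unset Strict Implicit. Unset Printing Implicit Defensive.
Import GRing.Theory Num.Theory.
Local Open Scope ring_scope.

Notation M4 := 'M[int]_4.

Definition mx4 (l : seq (seq int)) : M4 :=
  \matrix_(i < 4, j < 4) nth 0 (nth [::] l i) j.

Definition Cs : M4 :=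
  mx4 [:: [:: 0; 0; 1; 0]; [:: 0; 0; 0; 1]; [:: -1; 0; 0; 0]; [:: 0; -1; 0; 0]].

Definition inSp4Z (g : M4) : Prop := g^T *m Cs *m g = Cs.

Inductive gen (S : seq M4) : M4 -> Prop :=
| gen_one : gen S 1%:M
| gen_in g : g \in S -> gen S g
| gen_mul g h : gen S g -> gen S h -> gen S (g *m h)
| gen_inv g : gen S g -> gen S (invmx g).

Definition S1 : M4 := mx4 [:: [:: 0;0;1;0]; [:: 0;1;0;0]; [:: -1;0;0;0]; [:: 0;0;0;1]].
Definition S2 : M4 := mx4 [:: [:: 1;0;0;0]; [:: 0;0;0;1]; [:: 0;0;1;0]; [:: 0;-1;0;0]].
Definition Q1 : M4 := mx4 [:: [:: 0;-1;0;0]; [:: 1;0;0;0]; [:: 0;0;0;-1]; [:: 0;0;1;0]].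
Definition Q2 : M4 := mx4 [:: [:: 0;0;0;1]; [:: 0;0;1;0]; [:: 0;-1;0;0]; [:: -1;0;0;0]].
Definition T1 : M4 := mx4 [:: [:: 1;0;1;0]; [:: 0;1;0;0]; [:: 0;0;1;0]; [:: 0;0;0;1]].
Definition T2 : M4 := mx4 [:: [:: 1;0;0;0]; [:: 0;1;0;1]; [:: 0;0;1;0]; [:: 0;0;0;1]].
Definition T3 : M4 := mx4 [:: [:: 1;0;0;1]; [:: 0;1;1;0]; [:: 0;0;1;0]; [:: 0;0;0;1]].
Definition T4 : M4 := mx4 [:: [:: 1;1;0;0]; [:: 0;1;0;0]; [:: 0;0;1;0]; [:: 0;0;-1;1]].
Definition T5 : M4 := mx4 [:: [:: 1;0;0;0]; [:: -1;1;0;0]; [:: 0;0;1;1]; [:: 0;0;0;1]].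
Definition T6 : M4 := mx4 [:: [:: 1;0;0;0]; [:: 0;1;0;0]; [:: -1;0;1;0]; [:: 0;0;0;1]].
Definition T7 : M4 := mx4 [:: [:: 1;0;0;0]; [:: 0;1;0;0]; [:: 0;-1;1;0]; [:: -1;0;0;1]].
Definition T8 : M4 := mx4 [:: [:: 1;0;0;0]; [:: 0;1;0;0]; [:: 0;0;1;0]; [:: 0;-1;0;1]].

Definition Pgens : seq M4 := [:: S1; S2; Q1; Q2].
Definition Tgens : seq M4 := [:: T1; T2; T3; T4; T5; T6; T7; T8].
Definition Dgens : seq M4 := Pgens ++ Tgens.

Definition mA : M4 := Q1 *m S1.
Definition mB : M4 := Q2 ^+ 3.

Definition Tpm4 : seq M4 :=
  [:: T1; invmx T1; T2; invmx T2; T3; invmx T3; T4; invmx T4].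
Definition Tpm8 : seq M4 :=
  [:: T1; invmx T1; T2; invmx T2; T3; invmx T3; T4; invmx T4;
      T5; invmx T5; T6; invmx T6; T7; invmx T7; T8; invmx T8].

(* Main.v *)
Require Import Defs.
From mathcomp Require Import all_boot all_order all_algebra.
Import GRing.Theory Num.Theory.
Local Open Scope ring_scope.

Definition lst := seq (seq int).
Definition ent (a : lst) (i j : nat) : int := nth 0 (nth [::] a i) j.
Definition lmul (a b : lst) : lst :=
  mkseq (fun i => mkseq (fun j => ent a i 0 * ent b 0 j + ent a i 1 * ent b 1 j
     + ent a i 2 * ent b 2 j + ent a i 3 * ent b 3 j) 4) 4.
Definition ltr (a : lst) : lst := mkseq (fun i => mkseq (fun j => ent a j i) 4) 4.
Definition idl : lst := [:: [:: 1; 0; 0; 0]; [:: 0; 1; 0; 0]; [:: 0; 0; 1; 0]; [:: 0; 0; 0; 1]].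
Definition Csl : lst := [:: [:: 0; 0; 1; 0]; [:: 0; 0; 0; 1]; [:: -1; 0; 0; 0]; [:: 0; -1; 0; 0]].
Definition nCsl : lst := [:: [:: 0; 0; -1; 0]; [:: 0; 0; 0; -1]; [:: 1; 0; 0; 0]; [:: 0; 1; 0; 0]].
Definition linv (a : lst) : lst := lmul (lmul nCsl (ltr a)) Csl.
Fixpoint lpow (a : lst) n := if n is n'.+1 then lmul (lpow a n') a else idl.
Definition wf (a : lst) := (size a == 4%N) && all (fun r => size r == 4%N) a.

Lemma mx4E (a : lst) (i j : 'I_4) : mx4 a i j = ent a i j.
Proof. by rewrite mxE. Qed.

Lemma mx4_mul a b : mx4 (lmul a b) = mx4 a *m mx4 b.
Proof.
apply/matrixP => i j; rewrite !mxE /lmul.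
rewrite nth_mkseq // nth_mkseq //.
by rewrite !big_ord_recr big_ord0 /= !mxE add0r.
Qed.

Lemma mx4_tr a : mx4 (ltr a) = (mx4 a)^T.
Proof. by apply/matrixP => i j; rewrite !mxE /ltr /ent nth_mkseq // nth_mkseq. Qed.

Lemma mx4_id : mx4 idl = 1%:M.
Proof.
apply/matrixP => i j; rewrite !mxE.
by case: i => [[|[|[|[|?]]]] ?]; case: j => [[|[|[|[|?]]]] ?].
Qed.

Lemma mx4_pow a n : mx4 (lpow a n) = mx4 a ^+ n.
Proof.
elim: n => [|n IH] /=; first by rewrite mx4_id expr0.
by rewrite mx4_mul IH exprSr mulmxE.
Qed.

Lemma inv_uniq (A B : M4) : A *m B = 1%:M -> invmx A = B.
Proof.
move=> h; have [uA uB] := mulmx1_unit h.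
by rewrite -[invmx A]mulmx1 -h mulmxA mulVmx // mul1mx.
Qed.

Lemma mx4_inv a b : lmul a b = idl -> invmx (mx4 a) = mx4 b.
Proof. by move=> h; apply: inv_uniq; rewrite -mx4_mul h mx4_id. Qed.

Lemma invmxM4 (A B : M4) : A \in unitmx -> B \in unitmx ->
  invmx (A *m B) = invmx B *m invmx A.
Proof.
move=> uA uB; apply: inv_uniq.
by rewrite mulmxA -(mulmxA A) mulmxV // mulmx1 mulmxV.
Qed.

Lemma mx4_inj a b : wf a -> wf b -> mx4 a = mx4 b -> a = b.
Proof.
move=> /andP[/eqP sa /(all_nthP [::]) ra] /andP[/eqP sb /(all_nthP [::]) rb] e.
have E i j : (i < 4)%N -> (j < 4)%N -> ent a i j = ent b i j.
  move=> hi hj; have := congr1 (fun M : M4 => M (Ordinal hi) (Ordinal hj)) e.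
  by rewrite !mxE.
apply: (@eq_from_nth _ [::]); first by rewrite sa sb.
move=> i; rewrite sa => hi.
have hia : (i < size a)%N by rewrite sa.
have hib : (i < size b)%N by rewrite sb.
have /eqP s1 := ra i hia; have /eqP s2 := rb i hib.
apply: (@eq_from_nth _ 0); first by rewrite s1 s2.
by move=> j; rewrite s1 => hj; apply: E.
Qed.

Lemma genU S : (forall g, g \in S -> g \in unitmx) -> forall g, gen S g -> g \in unitmx.
Proof.
move=> hS g; elim => //=.
- exact: unitmx1.
- by move=> ?? ? u1 ? u2; rewrite unitmx_mul u1 u2.
- by move=> ?? u; rewrite unitmx_inv.
Qed.

Definition closedb (L : seq lst) := all (fun a => all (fun b => lmul a b \in L) L) L.
Definition invb (L : seq lst) :=
  all (fun a => lmul a (linv a) == idl) L && all (fun a => linv a \in L) L.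

Lemma gen_sub (S : seq M4) (L : seq lst) : idl \in L -> closedb L -> invb L ->
  (forall g, g \in S -> exists2 a, a \in L & g = mx4 a) ->
  forall g, gen S g -> exists2 a, a \in L & g = mx4 a.
Proof.
move=> hid /allP hc /andP[/allP hi1 /allP hi2] hS g; elim.
- by exists idl; rewrite ?mx4_id.
- exact: hS.
- move=> ?? _ [a ha ->] _ [b hb ->]; exists (lmul a b); last by rewrite mx4_mul.
  exact: (allP (hc a ha)).
- move=> ? _ [a ha ->]; exists (linv a); first exact: hi2.
  by apply: mx4_inv; apply/eqP; apply: hi1.
Qed.

Fixpoint certb (gs seen rest : seq lst) : bool :=
  match rest with
  | [::] => true
  | a :: r => ((a \in seen) || has (fun x => has (fun g => lmul x g == a) gs) seen)
              && certb gs (a :: seen) r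
  end.

Lemma certP S gs : (forall g, g \in gs -> gen S (mx4 g)) ->
  forall rest seen, (forall x, x \in seen -> gen S (mx4 x)) -> certb gs seen rest ->
  forall a, a \in rest -> gen S (mx4 a).
Proof.
move=> hg; elim => [//|a r IH] seen hs /= /andP[ha hr].
have ga : gen S (mx4 a).
  case/orP: ha => [/hs //|/hasP[x hx /hasP[g hgs /eqP <-]]].
  by rewrite mx4_mul; apply: gen_mul; [apply: hs | apply: hg].
move=> b; rewrite inE => /orP[/eqP -> //|hb].
apply: (IH (a :: seen)) => // x; rewrite inE => /orP[/eqP -> //|]; exact: hs.
Qed.

Definition S1l : lst := [:: [:: 0;0;1;0]; [:: 0;1;0;0]; [:: -1;0;0;0]; [:: 0;0;0;1]].
Definition S2l : lst := [:: [:: 1;0;0;0]; [:: 0;0;0;1]; [:: 0;0;1;0]; [:: 0;-1;0;0]].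
Definition Q1l : lst := [:: [:: 0;-1;0;0]; [:: 1;0;0;0]; [:: 0;0;0;-1]; [:: 0;0;1;0]].
Definition Q2l : lst := [:: [:: 0;0;0;1]; [:: 0;0;1;0]; [:: 0;-1;0;0]; [:: -1;0;0;0]].
Definition T1l : lst := [:: [:: 1;0;1;0]; [:: 0;1;0;0]; [:: 0;0;1;0]; [:: 0;0;0;1]].
Definition T2l : lst := [:: [:: 1;0;0;0]; [:: 0;1;0;1]; [:: 0;0;1;0]; [:: 0;0;0;1]].
Definition T3l : lst := [:: [:: 1;0;0;1]; [:: 0;1;1;0]; [:: 0;0;1;0]; [:: 0;0;0;1]].
Definition T4l : lst := [:: [:: 1;1;0;0]; [:: 0;1;0;0]; [:: 0;0;1;0]; [:: 0;0;-1;1]].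
Definition T5l : lst := [:: [:: 1;0;0;0]; [:: -1;1;0;0]; [:: 0;0;1;1]; [:: 0;0;0;1]].
Definition T6l : lst := [:: [:: 1;0;0;0]; [:: 0;1;0;0]; [:: -1;0;1;0]; [:: 0;0;0;1]].
Definition T7l : lst := [:: [:: 1;0;0;0]; [:: 0;1;0;0]; [:: 0;-1;1;0]; [:: -1;0;0;1]].
Definition T8l : lst := [:: [:: 1;0;0;0]; [:: 0;1;0;0]; [:: 0;0;1;0]; [:: 0;-1;0;1]].
Definition PL : seq lst := [:: S1l; S2l; Q1l; Q2l].
Definition TL : seq lst := [:: T1l; T2l; T3l; T4l; T5l; T6l; T7l; T8l].
Definition DL : seq lst := PL ++ TL.
Definition Al : lst := lmul Q1l S1l.
Definition Bl : lst := lpow Q2l 3.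
Definition L4 : seq lst := [:: T1l; linv T1l; T2l; linv T2l; T3l; linv T3l; T4l; linv T4l].
Definition L8 : seq lst := [:: T1l; linv T1l; T2l; linv T2l; T3l; linv T3l; T4l; linv T4l;
  T5l; linv T5l; T6l; linv T6l; T7l; linv T7l; T8l; linv T8l].
Definition LP : seq lst := [::
  [:: [:: 1; 0; 0; 0]; [:: 0; 1; 0; 0]; [:: 0; 0; 1; 0]; [:: 0; 0; 0; 1]];
  [:: [:: 0; 0; 1; 0]; [:: 0; 1; 0; 0]; [:: -1; 0; 0; 0]; [:: 0; 0; 0; 1]];
  [:: [:: 1; 0; 0; 0]; [:: 0; 0; 0; 1]; [:: 0; 0; 1; 0]; [:: 0; -1; 0; 0]];
  [:: [:: 0; -1; 0; 0]; [:: 1; 0; 0; 0]; [:: 0; 0; 0; -1]; [:: 0; 0; 1; 0]];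
  [:: [:: 0; 0; 0; 1]; [:: 0; 0; 1; 0]; [:: 0; -1; 0; 0]; [:: -1; 0; 0; 0]];
  [:: [:: -1; 0; 0; 0]; [:: 0; 1; 0; 0]; [:: 0; 0; -1; 0]; [:: 0; 0; 0; 1]];
  [:: [:: 0; 0; 1; 0]; [:: 0; 0; 0; 1]; [:: -1; 0; 0; 0]; [:: 0; -1; 0; 0]];
  [:: [:: 0; 0; 0; -1]; [:: 1; 0; 0; 0]; [:: 0; 1; 0; 0]; [:: 0; 0; 1; 0]];
  [:: [:: 0; -1; 0; 0]; [:: 0; 0; 1; 0]; [:: 0; 0; 0; -1]; [:: -1; 0; 0; 0]];
  [:: [:: 1; 0; 0; 0]; [:: 0; -1; 0; 0]; [:: 0; 0; 1; 0]; [:: 0; 0; 0; -1]];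
  [:: [:: 0; 0; 0; 1]; [:: -1; 0; 0; 0]; [:: 0; -1; 0; 0]; [:: 0; 0; -1; 0]];
  [:: [:: -1; 0; 0; 0]; [:: 0; -1; 0; 0]; [:: 0; 0; -1; 0]; [:: 0; 0; 0; -1]];
  [:: [:: 0; 0; -1; 0]; [:: 0; 0; 0; 1]; [:: 1; 0; 0; 0]; [:: 0; -1; 0; 0]];
  [:: [:: 0; 0; 1; 0]; [:: 0; 0; 0; -1]; [:: -1; 0; 0; 0]; [:: 0; 1; 0; 0]];
  [:: [:: 0; 0; -1; 0]; [:: 0; 1; 0; 0]; [:: 1; 0; 0; 0]; [:: 0; 0; 0; 1]];
  [:: [:: -1; 0; 0; 0]; [:: 0; 0; 0; 1]; [:: 0; 0; -1; 0]; [:: 0; -1; 0; 0]];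
  [:: [:: 0; 1; 0; 0]; [:: 1; 0; 0; 0]; [:: 0; 0; 0; 1]; [:: 0; 0; 1; 0]];
  [:: [:: 0; 0; 0; -1]; [:: 0; 0; 1; 0]; [:: 0; 1; 0; 0]; [:: -1; 0; 0; 0]];
  [:: [:: 0; 0; 1; 0]; [:: 0; -1; 0; 0]; [:: -1; 0; 0; 0]; [:: 0; 0; 0; -1]];
  [:: [:: 0; -1; 0; 0]; [:: -1; 0; 0; 0]; [:: 0; 0; 0; -1]; [:: 0; 0; -1; 0]];
  [:: [:: 0; 0; -1; 0]; [:: 0; -1; 0; 0]; [:: 1; 0; 0; 0]; [:: 0; 0; 0; -1]];
  [:: [:: -1; 0; 0; 0]; [:: 0; 0; 0; -1]; [:: 0; 0; -1; 0]; [:: 0; 1; 0; 0]];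
  [:: [:: 1; 0; 0; 0]; [:: 0; 0; 0; -1]; [:: 0; 0; 1; 0]; [:: 0; 1; 0; 0]];
  [:: [:: 0; 0; 0; 1]; [:: 0; 0; -1; 0]; [:: 0; -1; 0; 0]; [:: 1; 0; 0; 0]];
  [:: [:: 0; 1; 0; 0]; [:: -1; 0; 0; 0]; [:: 0; 0; 0; 1]; [:: 0; 0; -1; 0]];
  [:: [:: 0; 0; 0; -1]; [:: 0; 0; -1; 0]; [:: 0; 1; 0; 0]; [:: 1; 0; 0; 0]];
  [:: [:: 0; 0; 0; 1]; [:: 1; 0; 0; 0]; [:: 0; -1; 0; 0]; [:: 0; 0; 1; 0]];
  [:: [:: 0; 1; 0; 0]; [:: 0; 0; 1; 0]; [:: 0; 0; 0; 1]; [:: -1; 0; 0; 0]];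
  [:: [:: 0; 0; 0; -1]; [:: -1; 0; 0; 0]; [:: 0; 1; 0; 0]; [:: 0; 0; -1; 0]];
  [:: [:: 0; 0; -1; 0]; [:: 0; 0; 0; -1]; [:: 1; 0; 0; 0]; [:: 0; 1; 0; 0]];
  [:: [:: 0; -1; 0; 0]; [:: 0; 0; -1; 0]; [:: 0; 0; 0; -1]; [:: 1; 0; 0; 0]];
  [:: [:: 0; 1; 0; 0]; [:: 0; 0; -1; 0]; [:: 0; 0; 0; 1]; [:: 1; 0; 0; 0]]].
Definition LAB : seq lst := [::
  [:: [:: 1; 0; 0; 0]; [:: 0; 1; 0; 0]; [:: 0; 0; 1; 0]; [:: 0; 0; 0; 1]];
  [:: [:: 0; -1; 0; 0]; [:: 0; 0; 1; 0]; [:: 0; 0; 0; -1]; [:: -1; 0; 0; 0]];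
  [:: [:: 0; 0; 0; -1]; [:: 0; 0; -1; 0]; [:: 0; 1; 0; 0]; [:: 1; 0; 0; 0]];
  [:: [:: 0; 0; -1; 0]; [:: 0; 0; 0; -1]; [:: 1; 0; 0; 0]; [:: 0; 1; 0; 0]];
  [:: [:: 0; 0; 1; 0]; [:: 0; 1; 0; 0]; [:: -1; 0; 0; 0]; [:: 0; 0; 0; 1]];
  [:: [:: 1; 0; 0; 0]; [:: 0; 0; 0; 1]; [:: 0; 0; 1; 0]; [:: 0; -1; 0; 0]];
  [:: [:: -1; 0; 0; 0]; [:: 0; -1; 0; 0]; [:: 0; 0; -1; 0]; [:: 0; 0; 0; -1]];
  [:: [:: 0; 0; 0; 1]; [:: 1; 0; 0; 0]; [:: 0; -1; 0; 0]; [:: 0; 0; 1; 0]];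
  [:: [:: 0; -1; 0; 0]; [:: -1; 0; 0; 0]; [:: 0; 0; 0; -1]; [:: 0; 0; -1; 0]];
  [:: [:: 0; 0; 0; -1]; [:: 0; 0; 1; 0]; [:: 0; 1; 0; 0]; [:: -1; 0; 0; 0]];
  [:: [:: 0; 1; 0; 0]; [:: 0; 0; -1; 0]; [:: 0; 0; 0; 1]; [:: 1; 0; 0; 0]];
  [:: [:: 0; 0; 0; -1]; [:: 1; 0; 0; 0]; [:: 0; 1; 0; 0]; [:: 0; 0; 1; 0]];
  [:: [:: 0; 0; 0; 1]; [:: 0; 0; 1; 0]; [:: 0; -1; 0; 0]; [:: -1; 0; 0; 0]];
  [:: [:: 1; 0; 0; 0]; [:: 0; 0; 0; -1]; [:: 0; 0; 1; 0]; [:: 0; 1; 0; 0]];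
  [:: [:: 0; 0; -1; 0]; [:: 0; 1; 0; 0]; [:: 1; 0; 0; 0]; [:: 0; 0; 0; 1]];
  [:: [:: 0; 0; 1; 0]; [:: 0; 0; 0; 1]; [:: -1; 0; 0; 0]; [:: 0; -1; 0; 0]];
  [:: [:: -1; 0; 0; 0]; [:: 0; 1; 0; 0]; [:: 0; 0; -1; 0]; [:: 0; 0; 0; 1]];
  [:: [:: 0; 0; -1; 0]; [:: 0; -1; 0; 0]; [:: 1; 0; 0; 0]; [:: 0; 0; 0; -1]];
  [:: [:: 1; 0; 0; 0]; [:: 0; -1; 0; 0]; [:: 0; 0; 1; 0]; [:: 0; 0; 0; -1]];
  [:: [:: -1; 0; 0; 0]; [:: 0; 0; 0; -1]; [:: 0; 0; -1; 0]; [:: 0; 1; 0; 0]];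
  [:: [:: 0; -1; 0; 0]; [:: 1; 0; 0; 0]; [:: 0; 0; 0; -1]; [:: 0; 0; 1; 0]];
  [:: [:: 0; 0; 0; -1]; [:: -1; 0; 0; 0]; [:: 0; 1; 0; 0]; [:: 0; 0; -1; 0]];
  [:: [:: 0; -1; 0; 0]; [:: 0; 0; -1; 0]; [:: 0; 0; 0; -1]; [:: 1; 0; 0; 0]];
  [:: [:: 0; 1; 0; 0]; [:: 1; 0; 0; 0]; [:: 0; 0; 0; 1]; [:: 0; 0; 1; 0]];
  [:: [:: 0; 1; 0; 0]; [:: 0; 0; 1; 0]; [:: 0; 0; 0; 1]; [:: -1; 0; 0; 0]];
  [:: [:: 0; 0; 0; 1]; [:: 0; 0; -1; 0]; [:: 0; -1; 0; 0]; [:: 1; 0; 0; 0]];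
  [:: [:: 0; 0; 0; 1]; [:: -1; 0; 0; 0]; [:: 0; -1; 0; 0]; [:: 0; 0; -1; 0]];
  [:: [:: 0; 0; 1; 0]; [:: 0; 0; 0; -1]; [:: -1; 0; 0; 0]; [:: 0; 1; 0; 0]];
  [:: [:: -1; 0; 0; 0]; [:: 0; 0; 0; 1]; [:: 0; 0; -1; 0]; [:: 0; -1; 0; 0]];
  [:: [:: 0; 0; -1; 0]; [:: 0; 0; 0; 1]; [:: 1; 0; 0; 0]; [:: 0; -1; 0; 0]];
  [:: [:: 0; 0; 1; 0]; [:: 0; -1; 0; 0]; [:: -1; 0; 0; 0]; [:: 0; 0; 0; -1]];
  [:: [:: 0; 1; 0; 0]; [:: -1; 0; 0; 0]; [:: 0; 0; 0; 1]; [:: 0; 0; -1; 0]]].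

Lemma PgensE : Pgens = map mx4 PL. Proof. by []. Qed.
Lemma TgensE : Tgens = map mx4 TL. Proof. by []. Qed.
Lemma DgensE : Dgens = map mx4 DL. Proof. by []. Qed.
Lemma mAE : mA = mx4 Al. Proof. by rewrite /Al mx4_mul. Qed.
Lemma mBE : mB = mx4 Bl. Proof. by rewrite /Bl mx4_pow. Qed.

Lemma C1 : all (fun a => lmul (lmul (ltr a) Csl) a == Csl) DL. Proof. by vm_compute. Qed.
Lemma C2 : all (fun a => lmul a (linv a) == idl) DL. Proof. by vm_compute. Qed.
Lemma C3a : idl \in LP. Proof. by vm_compute. Qed.
Lemma C3b : closedb LP. Proof. by vm_compute. Qed.
Lemma C3c : invb LP. Proof. by vm_compute. Qed.
Lemma C3d : all (fun a => a \in LP) PL. Proof. by vm_compute. Qed.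
Lemma C3e : all (fun a => a \in LP) [:: Al; Bl]. Proof. by vm_compute. Qed.
Lemma C4a : certb PL [:: idl] LP. Proof. by vm_compute. Qed.
Lemma C4b : certb [:: Al; Bl] [:: idl] LAB. Proof. by vm_compute. Qed.
Lemma C4c : all (fun a => a \in LAB) LP. Proof. by vm_compute. Qed.
Lemma C5 : [&& all wf LP, uniq LP & size LP == 32%N]. Proof. by vm_compute. Qed.
Lemma C6a : [&& lpow Al 8 == idl, lpow Bl 4 == idl & lpow (lmul Bl Al) 4 == idl].
Proof. by vm_compute. Qed.
Lemma C6b : [&& lpow (lmul T1l T6l) 6 == idl, lpow (lmul T2l T8l) 6 == idl,
  lpow (lmul T3l T7l) 6 == idl & lpow (lmul T4l T5l) 6 == idl]. Proof. by vm_compute. Qed.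
Lemma C7 : all wf L8 && uniq L8. Proof. by vm_compute. Qed.
Lemma C8a : all (fun a => all (fun t => lmul (lmul a t) (linv a) \in L8) L4) LP.
Proof. by vm_compute. Qed.
Lemma C8b : all (fun m => has (fun a => has (fun t => lmul (lmul a t) (linv a) == m) L4) LP) L8.
Proof. by vm_compute. Qed.
Lemma C9a : all (fun a => all (fun t => lmul (lmul a t) (linv a) \in L8) TL) LP.
Proof. by vm_compute. Qed.
Lemma C9b : all (fun m => (m \in TL) || has (fun t => linv t == m) TL) L8.
Proof. by vm_compute. Qed.
Lemma C9c : all (fun a => lmul a (linv a) == idl) TL. Proof. by vm_compute. Qed.

Lemma allIn {T : eqType} {p : pred T} {s x} : all p s -> x \in s -> p x.
Proof. by move/allP; apply. Qed.

Lemma LP_inv a : a \in LP -> invmx (mx4 a) = mx4 (linv a).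
Proof.
move=> ha; apply: mx4_inv; apply/eqP.
by case/andP: C3c => /allP h _; apply: h.
Qed.

Lemma LP_unit a : a \in LP -> mx4 a \in unitmx.
Proof.
move=> ha; have [] // := @mulmx1_unit _ _ (mx4 a) (mx4 (linv a)).
by rewrite -mx4_mul; case/andP: C3c => /allP h _; rewrite (eqP (h a ha)) mx4_id.
Qed.

Lemma PgenE g : gen Pgens g <-> g \in map mx4 LP.
Proof.
split.
- move=> hg.
  have hS : forall h, h \in Pgens -> exists2 a, a \in LP & h = mx4 a.
    move=> h; rewrite PgensE => /mapP[a ha ->]; exists a => //; exact: allIn C3d ha.
  by have [a ha ->] := @gen_sub _ LP C3a C3b C3c hS _ hg; apply: map_f.
- case/mapP => a ha ->.
  have hg : forall h, h \in PL -> gen Pgens (mx4 h).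
    by move=> h hh; apply: gen_in; rewrite PgensE map_f.
  have hs : forall x, x \in [:: idl] -> gen Pgens (mx4 x).
    by move=> x; rewrite inE => /eqP ->; rewrite mx4_id; apply: gen_one.
  exact: (@certP Pgens PL hg LP [:: idl] hs C4a).
Qed.

Lemma ABgenE g : gen [:: mA; mB] g <-> g \in map mx4 LP.
Proof.
split.
- move=> hg.
  have hS : forall h, h \in [:: mA; mB] -> exists2 a, a \in LP & h = mx4 a.
    move=> h; rewrite mAE mBE !inE => /orP[] /eqP ->; [exists Al|exists Bl] => //;
    exact: allIn C3e _.
  by have [a ha ->] := @gen_sub _ LP C3a C3b C3c hS _ hg; apply: map_f.
- case/mapP => a ha ->.
  have hg : forall h, h \in [:: Al; Bl] -> gen [:: mA; mB] (mx4 h).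
    by move=> h; rewrite !inE => /orP[] /eqP ->; apply: gen_in;
      rewrite !inE ?mAE ?mBE eqxx ?orbT.
  have hs : forall x, x \in [:: idl] -> gen [:: mA; mB] (mx4 x).
    by move=> x; rewrite inE => /eqP ->; rewrite mx4_id; apply: gen_one.
  exact: (@certP _ _ hg LAB [:: idl] hs C4b a (allP C4c a ha)).
Qed.

Lemma Pgen_unit g : gen Pgens g -> g \in unitmx.
Proof. by move/PgenE/mapP => [a ha ->]; apply: LP_unit. Qed.

Lemma TL_inv t : t \in TL -> invmx (mx4 t) = mx4 (linv t).
Proof. by move=> ht; apply: mx4_inv; apply/eqP; apply: allIn C9c ht. Qed.

Lemma Tgen_unit t : gen Tgens t -> t \in unitmx.
Proof.
apply: genU; rewrite TgensE => g /mapP[a ha ->].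
have [] // := @mulmx1_unit _ _ (mx4 a) (mx4 (linv a)).
by rewrite -mx4_mul (eqP (allIn C9c ha)) mx4_id.
Qed.

Lemma L8gen m : m \in L8 -> gen Tgens (mx4 m).
Proof.
move=> hm; case/orP: (allIn C9b hm) => [ht|/hasP[t ht /eqP <-]].
- by apply: gen_in; rewrite TgensE map_f.
- by rewrite -TL_inv //; apply: gen_inv; apply: gen_in; rewrite TgensE map_f.
Qed.

Arguments LP_unit {a}.
Arguments Pgen_unit {g}.
Arguments Tgen_unit {t}.

Lemma conj_mul (G t1 t2 : M4) : G \in unitmx ->
  G *m (t1 *m t2) *m invmx G = (G *m t1 *m invmx G) *m (G *m t2 *m invmx G).
Proof.
move=> uG; by rewrite -!mulmxA (mulmxA (invmx G)) mulVmx // mul1mx.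
Qed.

Lemma NL a : a \in LP -> forall t, gen Tgens t -> gen Tgens (mx4 a *m t *m invmx (mx4 a)).
Proof.
move=> ha t; have uG := LP_unit ha; elim.
- by rewrite mulmx1 mulmxV //; apply: gen_one.
- move=> g; rewrite TgensE => /mapP[ti hti ->].
  rewrite LP_inv // -!mx4_mul; apply: L8gen.
  exact: (allIn (allIn C9a ha) hti).
- by move=> g h _ h1 _ h2; rewrite conj_mul //; apply: gen_mul.
- move=> g hg h1; have ug := Tgen_unit hg.
  have -> : mx4 a *m invmx g *m invmx (mx4 a) = invmx (mx4 a *m g *m invmx (mx4 a)).
    by rewrite !invmxM4 ?unitmx_mul ?unitmx_inv ?uG ?ug // invmxK mulmxA.
  exact: gen_inv.
Qed.

Lemma NP gam : gen Pgens gam -> forall t, gen Tgens t -> gen Tgens (gam *m t *m invmx gam).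
Proof. by move/PgenE/mapP => [a ha ->]; apply: NL. Qed.

Lemma NPi gam : gen Pgens gam -> forall t, gen Tgens t -> gen Tgens (invmx gam *m t *m gam).
Proof. by move=> hg t ht; rewrite -{2}(invmxK gam); apply: NP => //; apply: gen_inv. Qed.

Lemma Dunit g : g \in Dgens -> g \in unitmx.
Proof.
rewrite DgensE => /mapP[a ha ->].
have [] // := @mulmx1_unit _ _ (mx4 a) (mx4 (linv a)).
by rewrite -mx4_mul (eqP (allIn C2 ha)) mx4_id.
Qed.

Lemma Dsp g : g \in Dgens -> inSp4Z g.
Proof.
rewrite DgensE => /mapP[a ha ->]; rewrite /inSp4Z.
have -> : Cs = mx4 Csl by [].
by rewrite -mx4_tr -!mx4_mul (eqP (allIn C1 ha)).
Qed.

Lemma Dgen_sp g : gen Dgens g -> g \in unitmx /\ inSp4Z g.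
Proof.
elim.
- by rewrite /inSp4Z trmx1 mul1mx mulmx1 unitmx1.
- by move=> h hh; split; [apply: Dunit | apply: Dsp].
- move=> g1 g2 _ [u1 s1] _ [u2 s2]; split; first by rewrite unitmx_mul u1 u2.
  by rewrite /inSp4Z trmx_mul -[RHS]s2 -{2}s1 !mulmxA.
- move=> h _ [u s]; split; first by rewrite unitmx_inv.
  by rewrite /inSp4Z -{1}s !mulmxA -trmx_mul mulmxV // trmx1 mul1mx -mulmxA mulmxV // mulmx1.
Qed.

Lemma decomp g : gen Dgens g -> exists gam t, gen Pgens gam /\ gen Tgens t /\ g = gam *m t.
Proof.
elim.
- by exists 1%:M, 1%:M; rewrite mulmx1; split; [apply: gen_one|split; [apply: gen_one|]].
- move=> h; rewrite mem_cat => /orP[hp|ht].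
  + by exists h, 1%:M; rewrite mulmx1; split; [apply: gen_in|split; [apply: gen_one|]].
  + by exists 1%:M, h; rewrite mul1mx; split; [apply: gen_one|split; [apply: gen_in|]].
- move=> g1 g2 _ [a1 [t1 [ha1 [ht1 ->]]]] _ [a2 [t2 [ha2 [ht2 ->]]]].
  have ua2 := Pgen_unit ha2.
  exists (a1 *m a2), (invmx a2 *m t1 *m a2 *m t2); split; first exact: gen_mul.
  split; first by apply: gen_mul => //; apply: NPi.
  by rewrite -!mulmxA (mulmxA a2) mulmxV // mul1mx.
- move=> h _ [a [t [ha [ht ->]]]].
  have ua := Pgen_unit ha; have ut := Tgen_unit ht.
  exists (invmx a), (a *m invmx t *m invmx a); split; first exact: gen_inv.
  split; first by apply: NP => //; apply: gen_inv.
  by rewrite invmxM4 // !mulmxA mulVmx // mul1mx.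
Qed.

Theorem mainTheorem2 :
  (* all matrices lie in Sp(4,Z) *)
  (forall g, g \in Dgens -> inSp4Z g) /\
  (* (i) *)
  (exists s : seq M4, uniq s /\ size s = 32%N /\ (forall g, gen Pgens g <-> g \in s)) /\
  (forall g, gen Pgens g <-> gen [:: mA; mB] g) /\
  mA ^+ 8 = 1 /\ mB ^+ 4 = 1 /\ (mB *m mA) ^+ 4 = 1 /\
  (* (ii) *)
  uniq Tpm8 /\
  (forall M, (exists gam T, gen Pgens gam /\ T \in Tpm4 /\ M = gam *m T *m invmx gam)
             <-> M \in Tpm8) /\
  (* (iii) *)
  (T1 *m T6) ^+ 6 = 1 /\ (T2 *m T8) ^+ 6 = 1 /\
  (T3 *m T7) ^+ 6 = 1 /\ (T4 *m T5) ^+ 6 = 1 /\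
  (* (iv) *)
  (forall g, gen Dgens g -> inSp4Z g) /\
  (forall g, gen Dgens g -> exists gam t, gen Pgens gam /\ gen Tgens t /\ g = gam *m t) /\
  (forall g t, gen Dgens g -> gen Tgens t -> gen Tgens (g *m t *m invmx g)).
Proof.
have iT : forall t, t \in TL -> invmx (mx4 t) = mx4 (linv t) by apply: TL_inv.
have Tpm4E : Tpm4 = map mx4 L4.
{ rewrite /Tpm4 /T1 /T2 /T3 /T4 !iT; first reflexivity.
  all: by vm_compute. }
have Tpm8E : Tpm8 = map mx4 L8.
{ rewrite /Tpm8 /T1 /T2 /T3 /T4 /T5 /T6 /T7 /T8 !iT; first reflexivity.
  all: by vm_compute. }
have winj : {in L8 &, injective mx4}.
  case/andP: C7 => wL8 _.
  by move=> x y hx hy; apply: mx4_inj; [exact: allIn wL8 hx | exact: allIn wL8 hy].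
case/and3P: C5 => wLP uLP /eqP sLP.
case/and3P: C6a => /eqP e1 /eqP e2 /eqP e3.
case/and4P: C6b => /eqP e4 /eqP e5 /eqP e6 /eqP e7.
have one : (1 : M4) = mx4 idl by rewrite mx4_id.
split; first exact: Dsp.
split.
  exists (map mx4 LP); split.
    rewrite map_inj_in_uniq; first exact: uLP.
    by move=> x y hx hy; apply: mx4_inj; [exact: allIn wLP hx|exact: allIn wLP hy].
  split; first by rewrite size_map sLP.
  exact: PgenE.
split; first by move=> g; split => [/PgenE/ABgenE | /ABgenE/PgenE].
split; first by rewrite mAE -mx4_pow e1 one.
split; first by rewrite mBE -mx4_pow e2 one.
split; first by rewrite mAE mBE -mx4_mul -mx4_pow e3 one.
split.
  rewrite Tpm8E map_inj_in_uniq; first by case/andP: C7.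
  exact: winj.
split.
  move=> M; rewrite Tpm8E; split.
  - move=> [gam [T [/PgenE/mapP[a ha ->] [hT ->]]]].
    move: hT; rewrite Tpm4E => /mapP[t ht ->].
    rewrite (LP_inv _ ha) -!mx4_mul; apply: map_f; exact: (allIn (allIn C8a ha) ht).
  - case/mapP => m hm ->; have /hasP[a ha /hasP[t ht /eqP <-]] := allIn C8b hm.
    exists (mx4 a), (mx4 t); split; first by apply/PgenE; exact: map_f ha.
    split; first by rewrite Tpm4E; exact: map_f ht.
    by rewrite (LP_inv _ ha) -!mx4_mul.
split; first by rewrite -!mx4_mul -mx4_pow e4 one.
split; first by rewrite -!mx4_mul -mx4_pow e5 one.
split; first by rewrite -!mx4_mul -mx4_pow e6 one.
split; first by rewrite -!mx4_mul -mx4_pow e7 one.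
split; first by move=> g /Dgen_sp[].
split; first exact: decomp.
move=> g t /decomp[a [t0 [ha [ht0 ->]]]] ht.
have ua := Pgen_unit ha; have ut0 := Tgen_unit ht0.
have -> : a *m t0 *m t *m invmx (a *m t0) = a *m (t0 *m t *m invmx t0) *m invmx a.
  by rewrite (invmxM4 _ _ ua ut0) !mulmxA.
apply: (NP _ ha); apply: gen_mul; [apply: gen_mul; [exact: ht0|exact: ht]|exact: gen_inv ht0].
Qed.
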